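(* Let $m\in\mathbb{N}$, let $\|\cdot\|$ be an arbitrary norm on $\mathbb{R}^m$, and let $\varepsilon>0$. Set $n(m):=\lceil \log_2(m+1)\rceil+1$. Then there exists an algorithm $R_m^\varepsilon\colon\mathbb{R}^m\to\mathbb{R}^m$ that uses at most $n(m)$ adaptively chosen measurements, each of which is a Lipschitz-continuous functional $\mathbb{R}^m\to\mathbb{R}$ (with Lipschitz constant $1$ with respect to $\|\cdot\|$), such that \[ \|x-R_m^\varepsilon(x)\|\le\varepsilon\qquad\text{for all }x\in\mathbb{R}^m. \]
   Context: An algorithm using at most $n$ adaptive measurements on $\mathbb{R}^m$ is a map of the form $x\mapsto \Phi(y_1,\dots,y_n)$, where $y_1=\lambda_1(x)$ for a fixed functional $\lambda_1\colon\mathbb{R}^m\to\mathbb{R}$, and for $k\ge 2$, $y_k=\lambda_k^{(y_1,\dots,y_{k-1})}(x)$, where the functional $\lambda_k^{(y_1,\dots,y_{k-1})}\colon\mathbb{R}^m\to\mathbb{R}$ may depend in an arbitrary way on the previously computed values $y_1,\dots,y_{k-1}$; the reconstruction map $\Phi\colon\mathbb{R}^n\to\mathbb{R}^m$ is arbitrary (not necessarily continuous). Here every functional that may ever be used is required to be Lipschitz continuous. *)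

(* Defs.v *)
From mathcomp Require Import all_boot all_order all_algebra.
From mathcomp Require Import reals.
Set Implicit Arguments. Unset Strict Implicit. Unset Printing Implicit Defensive.
Import Order.TTheory GRing.Theory Num.Theory.
Local Open Scope ring_scope.

Definition is_norm (R : realType) (m : nat) (N : 'rV[R]_m -> R) : Prop :=
  [/\ forall x, 0 <= N x,
      forall x, N x = 0 -> x = 0,
      forall (a : R) x, N (a *: x) = `|a| * N x
    & forall x y, N (x + y) <= N x + N y].

(* An adaptive algorithm: the k-th functional (k = 0,1,...) is selected by
   the sequence of previously computed values [y_1; ...; y_k]; the
   reconstruction map Phi : seq R -> R^m is arbitrary. *)
Record adaptive_alg (R : realType) (m : nat) := AdaptiveAlg {
  alg_lam : seq R -> 'rV[R]_m -> R;
  alg_Phi : seq R -> 'rV[R]_m }.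

Fixpoint measurements (R : realType) (m : nat) (A : adaptive_alg R m)
    (k : nat) (x : 'rV[R]_m) : seq R :=
  match k with
  | 0 => [::]
  | k'.+1 => let ys := measurements A k' x in rcons ys (alg_lam A ys x)
  end.

Definition run_alg (R : realType) (m : nat) (A : adaptive_alg R m)
    (k : nat) (x : 'rV[R]_m) : 'rV[R]_m :=
  alg_Phi A (measurements A k x).

Definition lipschitz1_measurements (R : realType) (m : nat)
    (N : 'rV[R]_m -> R) (A : adaptive_alg R m) (k : nat) : Prop :=
  forall (ys : seq R), (size ys < k)%N ->
    forall x y : 'rV[R]_m, `|alg_lam A ys x - alg_lam A ys y| <= N (x - y).

Definition n_meas (m : nat) : nat := (up_log 2 m.+1).+1.

(* Main.v *)
Require Import Defs.
From mathcomp Require Import all_boot all_order all_algebra.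
From mathcomp Require Import reals.
From mathcomp Require Import all_classical all_reals all_analysis.
From mathcomp Require Import zify ring lra.
From Stdlib Require Import ClassicalEpsilon.
Set Implicit Arguments. Unset Strict Implicit. Unset Printing Implicit Defensive.
Import Order.TTheory GRing.Theory Num.Theory.
Import numFieldNormedType.Exports.
Local Open Scope classical_set_scope.
Local Open Scope ring_scope.

Section DZ.
Variable R : realType.

Definition dZ (u : R) : R :=
  Num.min (u - (Num.floor u)%:~R) ((Num.floor u + 1)%:~R - u).

Lemma dZ_attain u : exists n : int, dZ u = `|u - n%:~R|.
Proof.
have /andP[h1 h2] := floor_itv u.
rewrite /dZ. have [le|lt] := leP (u - (Num.floor u)%:~R) ((Num.floor u + 1)%:~R - u).
  exists (Num.floor u). rewrite ger0_norm //. by rewrite subr_ge0.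
exists (Num.floor u + 1). rewrite ltr0_norm ?opprB //. by rewrite subr_lt0.
Qed.

Lemma dZ_le u (n : int) : dZ u <= `|u - n%:~R|.
Proof.
have /andP[h1 h2] := floor_itv u.
rewrite /dZ ge_min. have [le|lt] := leP n (Num.floor u).
  apply/orP; left. apply: le_trans (ler_norm _). rewrite lerB //. by rewrite ler_int.
apply/orP; right. rewrite -lezD1 in lt. rewrite distrC. apply: le_trans (ler_norm _).
rewrite lerB //. by rewrite ler_int.
Qed.

Lemma dZ_ge0 u : 0 <= dZ u.
Proof. have [n ->] := dZ_attain u. exact: normr_ge0. Qed.

Lemma dZ_lip u w : dZ u <= dZ w + `|u - w|.
Proof.
have [n hn] := dZ_attain w. apply: le_trans (dZ_le u n) _. rewrite hn.
have -> : u - n%:~R = (u - w) + (w - n%:~R) by rewrite addrA subrK.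
rewrite [X in _ <= X]addrC. exact: ler_normD.
Qed.

Lemma dZ_floor u w : Num.floor u != Num.floor w -> dZ u <= `|u - w|.
Proof.
move=> hne.
have /andP[u1 u2] := floor_itv u. have /andP[w1 w2] := floor_itv w.
have [lt|lt] := ltP (Num.floor u) (Num.floor w).
  apply: le_trans (dZ_le u (Num.floor u + 1)) _.
  rewrite -lezD1 in lt. rewrite -(ler_int R) in lt.
  rewrite !ler0_norm; lra.
have lt' : Num.floor w < Num.floor u by rewrite lt_neqAle eq_sym hne.
apply: le_trans (dZ_le u (Num.floor u)) _.
rewrite -lezD1 in lt'. rewrite -(ler_int R) in lt'.
move: w2; rewrite intrD => w2. rewrite !ger0_norm; lra.
Qed.

End DZ.

Section NE.
Variables (R : realType) (m : nat) (N : 'rV[R]_m -> R).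
Hypothesis hN : is_norm N.

Lemma NN0 : N 0 = 0.
Proof. case: hN => _ _ hz _. by rewrite -(scale0r (0:'rV[R]_m)) hz normr0 mul0r. Qed.

Lemma NNopp x : N (- x) = N x.
Proof. case: hN => _ _ hz _. by rewrite -scaleN1r hz normrN1 mul1r. Qed.

Lemma NNsub x y : N x - N y <= N (x - y).
Proof. case: hN => _ _ _ ht. rewrite lerBlDr. by rewrite -{1}(subrK y x) ht. Qed.

Lemma NNdist x y : `|N x - N y| <= N (x - y).
Proof.
rewrite ler_norml NNsub andbT lerNl opprB -[N (x - y)]NNopp opprB; exact: NNsub.
Qed.

Lemma coord_le (u : 'rV[R]_m) i : `|u 0 i| <= `|u|.
Proof.
rewrite [X in _ <= X]mx_normrE.
exact: (le_bigmax _ (fun ij : 'I_1 * 'I_m => `|u ij.1 ij.2|) (ord0, i)).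
Qed.

Definition CN := \sum_(j < m) N (delta_mx 0 j).

Lemma CN_ge0 : 0 <= CN.
Proof. case: hN => h0 _ _ _. by apply: sumr_ge0 => j _. Qed.

Lemma N_sum (I : Type) (r : seq I) (F : I -> 'rV[R]_m) :
  N (\sum_(i <- r) F i) <= \sum_(i <- r) N (F i).
Proof.
case: hN => _ _ _ ht.
elim: r => [|a r IH]; first by rewrite !big_nil NN0.
rewrite !big_cons. apply: le_trans (ht _ _) _. by rewrite lerD2l.
Qed.

Lemma N_upper u : N u <= CN * `|u|.
Proof.
case: hN => h0 _ hz _.
rewrite {1}(row_sum_delta u). apply: le_trans (N_sum _ _) _.
rewrite /CN mulr_suml. apply: ler_sum => j _. rewrite hz mulrC.
apply: ler_wpM2l; [exact: h0 | exact: coord_le].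
Qed.

Lemma N_cont : continuous N.
Proof.
move=> x. apply/(@cvgrPdist_lt _ _ _ (nbhs x) (nbhs_filter x)) => e e0.
have e1 : 0 < e / (CN + 1) by rewrite divr_gt0 // ltr_wpDl // CN_ge0.
near=> y.
apply: le_lt_trans (NNdist _ _) _.
apply: le_lt_trans (N_upper _) _.
have h : `|x - y| < e / (CN + 1).
  near: y. move: (e / (CN + 1)) e1. apply/(@cvgrPdist_lt _ _ _ (nbhs x) (nbhs_filter x) id). exact: cvg_id.
rewrite -(ltr_pM2r (_ : 0 < (CN+1)^-1)); last by rewrite invr_gt0 ltr_wpDl // CN_ge0.
apply: le_lt_trans h. rewrite mulrAC -[X in _ <= X]mul1r ler_wpM2r //.
by rewrite ler_pdivrMr ?mul1r ?lerDl // ltr_wpDl // CN_ge0.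
Unshelve. all: by end_near.
Qed.

Lemma norm_lower : exists2 c, 0 < c & forall u, c * `|u| <= N u.
Proof.
case: hN => h0 hnz hz _.
have [[w w0]|all0] := pselect (exists w : 'rV[R]_m, w != 0); last first.
  exists 1 => // u. have -> : u = 0.
    apply/eqP. apply: contraT => u0. by case: all0; exists u.
  rewrite normr0 mulr0. exact: h0.
pose S := [set u : 'rV[R]_m | `|u| = 1].
have S0 : S !=set0.
  exists (`|w|^-1 *: w). rewrite /S /= mx_normZ normfV normr_id mulVf //. by rewrite normr_eq0.
have Sc : compact S.
  apply: bounded_closed_compact.
    rewrite /= /bounded_near. near=> M. move=> u /= ->. near: M. exact: nbhs_pinfty_ge.
  rewrite /S. apply: (@preimage_closed _ _ (fun u : 'rV[R]_m => `|u|) [set 1]).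
  move=> u _; exact: norm_continuous. exact: closed_eq.
have [c cS cmin] := compact_EVT_min S0 Sc (continuous_subspaceT (@N_cont)).
move: cS; rewrite inE /S /= => c1.
have c0 : c != 0 by apply/eqP => c0; move: c1; rewrite c0 normr0 => /eqP; rewrite eq_sym oner_eq0.
have Nc0 : 0 < N c.
  rewrite lt_def h0 andbT. apply/eqP => /hnz /eqP. by rewrite (negbTE c0).
exists (N c) => // u.
have [->|u0] := eqVneq u 0; first by rewrite normr0 mulr0 h0.
have un0 : 0 < `|u| by rewrite normr_gt0.
have := cmin (`|u|^-1 *: u).
rewrite inE /S /= mx_normZ normfV normr_id mulVf ?gt_eqF // => /(_ erefl).
rewrite hz normfV normr_id => h.
by rewrite -ler_pdivlMr // mulrC.
Unshelve. all: by end_near. Qed.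
End NE.

Section Alg.
Variables (R : realType) (m : nat) (s : R).
Hypothesis s0 : 0 < s.

Definition del : R := ((m.+1).*2%:R)^-1.
Lemma del_gt0 : 0 < del. Proof. by rewrite invr_gt0 ltr0n double_gt0. Qed.
Lemma del_le1 : del <= 1.
Proof. rewrite invf_le1 ?ltr0n ?double_gt0 // ler1n. lia. Qed.
Lemma idel_ge1 : 1 <= del^-1.
Proof. rewrite invrK ler1n. lia. Qed.

Definition phi (u : R) := Num.max 0 (del - dZ u).
Lemma phi_ge0 u : 0 <= phi u. Proof. by rewrite /phi le_max lexx. Qed.
Lemma phi_lip u w : phi u <= phi w + `|u - w|.
Proof.
have := dZ_lip w u. rewrite distrC /phi => h.
have := normr_ge0 (u - w).
rewrite !maxEle. case: ifP; case: ifP => ?; lra.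
Qed.

Definition zc (j : nat) (x : 'rV[R]_m) (i : 'I_m) : R :=
  x 0 i / s - j%:R / (m.+1)%:R.

Lemma zc_diff j x y i : `|zc j x i - zc j y i| <= `|x - y| / s.
Proof.
have -> : zc j x i - zc j y i = (x - y) 0 i / s.
  rewrite /zc !mxE. ring.
rewrite normrM (gtr0_norm (_ : 0 < s^-1)) ?invr_gt0 // ler_pM2r ?invr_gt0 //. exact: coord_le.
Qed.

Definition Lc : R := del^-1 / s.
Lemma Lc_ge0 : 0 <= Lc. Proof. by rewrite /Lc divr_ge0 // ?invr_ge0 ltW // ?del_gt0. Qed.

Lemma Lc_ge (d : R) : 0 <= d -> d / s <= Lc * d.
Proof.
move=> d0. rewrite /Lc mulrAC. apply: ler_wpM2r; first by rewrite invr_ge0 ltW.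
rewrite -{1}[d]mul1r. apply: ler_wpM2r => //. exact: idel_ge1.
Qed.

Definition G (j : nat) (x : 'rV[R]_m) : R := \big[Num.max/0]_(i < m) phi (zc j x i).

Lemma G_ge0 j x : 0 <= G j x.
Proof. rewrite /G. elim/big_ind: _ => //. by move=> a b ha hb; rewrite le_max ha. move=> i _; exact: phi_ge0. Qed.

Lemma G_ge j x i : phi (zc j x i) <= G j x.
Proof. exact: (le_bigmax _ (fun i => phi (zc j x i)) i). Qed.

Lemma G_lip' j x y : G j x <= G j y + `|x - y| / s.
Proof.
apply: bigmax_le.
  apply: addr_ge0; [exact: G_ge0 | exact: divr_ge0 (normr_ge0 _) (ltW s0)].
move=> i _. apply: le_trans (phi_lip _ (zc j y i)) _.
apply: lerD; first exact: G_ge.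
exact: zc_diff.
Qed.

Lemma G_lip j x y : G j x <= G j y + Lc * `|x - y|.
Proof.
apply: le_trans (G_lip' j x y) _. rewrite lerD2l. exact: Lc_ge.
Qed.

Lemma absle (f : 'rV[R]_m -> R) :
  (forall x y, f x <= f y + Lc * `|x - y|) -> forall x y, `|f x - f y| <= Lc * `|x - y|.
Proof.
move=> h x y. rewrite ler_norml. have := h x y. have := h y x. rewrite (distrC y x). lra.
Qed.

Definition H (r k : nat) (x : 'rV[R]_m) : R :=
  \big[Num.min/1]_(j < m.+1 | (j %% 2 ^ k.+1 == r)%N) G j x.

Lemma H_lip r k x y : H r k x <= H r k y + Lc * `|x - y|.
Proof.
have e0 : 0 <= Lc * `|x - y| by exact: mulr_ge0 Lc_ge0 (normr_ge0 _).
rewrite -lerBlDr. apply: le_bigmin.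
  rewrite lerBlDr. apply: le_trans (bigmin_le_id _ _ _ _) _. lra.
move=> j hj. rewrite lerBlDr. apply: le_trans (G_lip _ x y).
exact: (bigmin_le_cond _ (fun j : 'I_m.+1 => G j x) hj).
Qed.

Lemma H_ge0 r k x : 0 <= H r k x.
Proof. apply: le_bigmin => // j _; exact: G_ge0. Qed.

Lemma H0 r k x (j : 'I_m.+1) : (j %% 2 ^ k.+1 == r)%N -> G j x = 0 -> H r k x = 0.
Proof.
move=> hj hG. apply/eqP. rewrite eq_le H_ge0 andbT -hG.
exact: (bigmin_le_cond _ (fun j : 'I_m.+1 => G j x) hj).
Qed.

Lemma Hpos r k x : H r k x != 0 -> forall j : 'I_m.+1, (j %% 2 ^ k.+1 == r)%N -> G j x != 0.
Proof. move=> hH j hj. apply: contra hH => /eqP h. apply/eqP. exact: H0 hj h. Qed.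

Definition K (j : nat) (x : 'rV[R]_m) : {ffun 'I_m -> int} :=
  [ffun i => Num.floor (zc j x i)].
Definition vv (k : {ffun 'I_m -> int}) : R := ((pickle k).+1%:R)^-1.

Lemma vv_gt0 k : 0 < vv k. Proof. by rewrite invr_gt0 ltr0n. Qed.
Lemma vv_le1 k : vv k <= 1. Proof. by rewrite invf_le1 ?ltr0n // ler1n. Qed.
Lemma vv_inj : injective vv.
Proof.
move=> a b /invr_inj /eqP. rewrite eqr_nat eqSS => /eqP. exact: (pcan_inj (@pickleK _)).
Qed.

Definition F (j : nat) (x : 'rV[R]_m) : R := Num.max 0 (vv (K j x) - del^-1 * G j x).

Lemma F_ge0 j x : 0 <= F j x. Proof. by rewrite /F le_max lexx. Qed.

Lemma F_G0 j x : G j x = 0 -> F j x = vv (K j x).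
Proof. move=> h. by rewrite /F h mulr0 subr0 max_r // ltW // vv_gt0. Qed.

Lemma F_lip j x y : F j x <= F j y + Lc * `|x - y|.
Proof.
have e0 : 0 <= Lc * `|x - y| by exact: mulr_ge0 Lc_ge0 (normr_ge0 _).
have [eK|nK] := eqVneq (K j x) (K j y).
  have h := G_lip' j y x. rewrite distrC in h.
  have hd := idel_ge1. have hd0 : 0 < del^-1 by lra.
  have h2 : del^-1 * G j y <= del^-1 * G j x + Lc * `|x - y|.
    have -> : Lc * `|x - y| = del^-1 * (`|x - y| / s) by rewrite /Lc; ring.
    by rewrite -mulrDr ler_wpM2l // ltW.
  rewrite /F eK. rewrite !maxEle. case: ifP; case: ifP => ? ?; lra.
have [i hi] : exists i, Num.floor (zc j x i) != Num.floor (zc j y i).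
  apply/existsP. apply: contraT => /existsPn h. case/eqP: nK.
  apply/ffunP => i. rewrite !ffunE. by have := h i; rewrite negbK => /eqP.
have hdz := dZ_floor hi. have hz := zc_diff j x y i.
have hphi := G_ge j x i.
have := F_ge0 j y.
have hd0 : 0 < del^-1 by have := idel_ge1; lra.
have hph : del - dZ (zc j x i) <= G j x.
  apply: le_trans hphi. by rewrite /phi le_max lexx orbT.
have h1 : 1 - del^-1 * dZ (zc j x i) <= del^-1 * G j x.
  have -> : 1 = del^-1 * del by rewrite mulVf // gt_eqF // del_gt0.
  by rewrite -mulrBr ler_wpM2l // ltW.
have h3 : del^-1 * dZ (zc j x i) <= Lc * `|x - y|.
  have -> : Lc * `|x - y| = del^-1 * (`|x - y| / s) by rewrite /Lc; ring.
  apply: ler_wpM2l; [exact: ltW | lra].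
have hv := vv_le1 (K j x). have hdz0 := dZ_ge0 (zc j x i).
have h4 : 0 <= del^-1 * dZ (zc j x i) by apply: mulr_ge0; lra.
rewrite /F !maxEle. case: ifP; case: ifP => ? ?; lra.
Qed.

Lemma G0_of j x : (forall i, del <= dZ (zc j x i)) -> G j x = 0.
Proof.
move=> h. rewrite /G. elim/big_ind: _ => //.
  by move=> a b -> ->; rewrite maxxx.
move=> i _. rewrite /phi max_l //. rewrite subr_le0. exact: h.
Qed.

Lemma dZ_sub (p q : R) : dZ (p - q) <= dZ p + dZ q.
Proof.
have [n1 h1] := dZ_attain p. have [n2 h2] := dZ_attain q.
apply: le_trans (dZ_le _ (n1 - n2)) _. rewrite h1 h2 intrB.
have -> : p - q - (n1%:~R - n2%:~R) = (p - n1%:~R) + (- (q - n2%:~R)) by ring.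
apply: le_trans (ler_normD _ _) _. by rewrite normrN.
Qed.

Lemma dZ_frac (j j' : 'I_m.+1) : j != j' ->
  ((m.+1)%:R)^-1 <= dZ ((j'%:R - j%:R) / (m.+1)%:R : R).
Proof.
move=> hjj. have [n hn] := dZ_attain ((j'%:R - j%:R) / (m.+1)%:R : R). rewrite hn.
have M0 : 0 < (m.+1)%:R :> R by rewrite ltr0n.
pose z : int := (j'%:Z - j%:Z - n * (m.+1)%:Z).
have hz : z != 0.
  apply/eqP => e.
  have hj := ltn_ord j. have hj' := ltn_ord j'.
  have : (n = 0 \/ 1 <= n \/ n <= -1)%R by lia.
  case=> [hn0|[hn0|hn0]].
  - subst n. rewrite /z in e. move/eqP: hjj => hjj. apply: hjj. apply: val_inj => /=. lia.
  - have : ((m.+1)%:Z <= n * (m.+1)%:Z)%R by nia. rewrite /z in e. lia.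
  - have : (n * (m.+1)%:Z <= - (m.+1)%:Z)%R by nia. rewrite /z in e. lia.
have -> : (j'%:R - j%:R) / (m.+1)%:R - n%:~R = z%:~R / (m.+1)%:R :> R.
  rewrite /z !intrB intrM !pmulrn. field. by rewrite gt_eqF.
rewrite normrM (gtr0_norm (_ : 0 < ((m.+1)%:R : R)^-1)) ?invr_gt0 //. rewrite -[X in X <= _]mul1r. apply: ler_wpM2r; first by rewrite invr_ge0 ltW.
rewrite -intr_norm ler1z. lia.
Qed.

Lemma cover x : exists j : 'I_m.+1, G j x = 0.
Proof.
apply: contrapT => hall.
have hex : forall j : 'I_m.+1, exists i : 'I_m, dZ (zc j x i) < del.
  move=> j. apply: contrapT => hne. apply: hall. exists j. apply: G0_of => i.
  rewrite leNgt. apply/negP => hlt. apply: hne. by exists i.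
have [f hf] := fin_all_exists hex.
have finj : injective f.
  move=> j j' e. apply/eqP. apply: contraT => hjj.
  have h1 := hf j. have h2 := hf j'. rewrite -e in h2.
  have := dZ_sub (zc j x (f j)) (zc j' x (f j)).
  have -> : zc j x (f j) - zc j' x (f j) = (j'%:R - j%:R) / (m.+1)%:R.
    by rewrite /zc; ring.
  have hfr := dZ_frac hjj.
  have hd2 : ((m.+1)%:R)^-1 = del + del :> R.
    rewrite /del -mul2n natrM invfM. field.
    apply/eqP => h. have := ler0n R m. lra.
  rewrite {1}hd2 in hfr. lra.
have := leq_card f finj. rewrite !card_ord. lia.
Qed.

End Alg.

Definition rr (R : realType) (ys : seq R) : nat :=
  foldr (fun (y : R) (acc : nat) => ((y != 0%R) + 2 * acc)%N) 0%N ys.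

Lemma rr_rcons (R : realType) (ys : seq R) y :
  rr (rcons ys y) = (rr ys + (y != 0%R) * 2 ^ size ys)%N.
Proof.
elim: ys => [|a ys IH] /=; first lia.
rewrite IH expnS. lia.
Qed.

Lemma mod_split j k : (j %% 2 ^ k.+1 = j %% 2 ^ k \/ j %% 2 ^ k.+1 = j %% 2 ^ k + 2 ^ k)%N.
Proof.
have hd : (2 ^ k %| 2 ^ k.+1)%N by rewrite expnS dvdn_mull.
have e : (j %% 2 ^ k = (j %% 2 ^ k.+1) %% 2 ^ k)%N by rewrite modn_dvdm.
have hq : (j %% 2 ^ k.+1 < 2 ^ k.+1)%N by rewrite ltn_mod expn_gt0.
have hp : (0 < 2 ^ k)%N by rewrite expn_gt0.
move: hq e. rewrite expnS. set q := (j %% (2 * 2 ^ k))%N. set p := (2 ^ k)%N. move=> hq e.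
have [lt|ge] := ltnP q p.
  left. by rewrite e modn_small.
right. rewrite e -{1 2}(subnK ge) modnDr modn_small; last lia. by rewrite subnK.
Qed.

Section Main.
Variables (R : realType) (m : nat) (s sc : R).
Hypotheses (s0 : 0 < s) (sc0 : 0 < sc).

Definition bb := up_log 2 m.+1.

Definition lam (ys : seq R) (x : 'rV[R]_m) : R :=
  if (size ys < bb)%N then sc * @H R m s (rr ys) (size ys) x else sc * @F R m s (rr ys) x.

Lemma Hpos' r k x : (forall j : 'I_m.+1, (j %% 2 ^ k.+1 == r)%N -> @G R m s j x != 0) -> @H R m s r k x != 0.
Proof.
move=> h. rewrite gt_eqF //. rewrite /H. elim/big_ind: _ => //.
  by move=> a b ha hb; rewrite lt_min ha hb.
move=> j hj. rewrite lt_def G_ge0 andbT. exact: h.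
Qed.

Lemma invariant (A : adaptive_alg R m) (hA : alg_lam A = lam) x k :
  (k <= bb)%N ->
  size (measurements A k x) = k /\
  exists j : 'I_m.+1, (j %% 2 ^ k = rr (measurements A k x))%N /\ @G R m s j x = 0.
Proof.
elim: k => [_|k IH hk] /=.
  split => //. have [j hj] := cover s0 x. exists j. by rewrite expn0 modn1.
have [hs [j [hj hG]]] := IH (ltnW hk).
rewrite size_rcons hs rr_rcons hA /lam hs hk. split => //.
have [H0'|Hn0] := eqVneq (@H R m s (rr (measurements A k x)) k x) 0.
  rewrite H0' mulr0 eqxx mul0n addn0.
  apply: contrapT => hne.
  move/eqP: H0'. apply/negP. apply: Hpos' => j' hj'. apply/eqP => hG'. apply: hne.
  exists j'. split => //. exact/eqP.
rewrite (_ : (sc * _ != 0) = true); last by rewrite mulf_neq0 // gt_eqF.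
exists j. split => //.
have hne : (j %% 2 ^ k.+1 != rr (measurements A k x))%N.
  apply/negP => /(@Hpos R m s _ _ _ Hn0 j). by rewrite hG eqxx.
case: (mod_split j k) => e; rewrite e in hne *.
  by rewrite hj eqxx in hne.
rewrite hj /=. lia.
Qed.

Lemma final_G (A : adaptive_alg R m) (hA : alg_lam A = lam) x :
  size (measurements A bb x) = bb /\ @G R m s (rr (measurements A bb x)) x = 0.
Proof.
have [hs [j [hj hG]]] := invariant hA x (leqnn bb).
split => //. rewrite -hj modn_small //.
apply: leq_trans (ltn_ord j) _. exact: up_logP.
Qed.

Lemma floor_close (u w : R) : Num.floor u = Num.floor w -> `|u - w| < 1.
Proof.
move=> e. have /andP[u1 u2] := floor_itv u. have /andP[w1 w2] := floor_itv w.
rewrite e intrD in u1 u2. rewrite intrD in w2. rewrite ltr_norml. apply/andP; split; lra.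
Qed.

Lemma same_meas (A : adaptive_alg R m) (hA : alg_lam A = lam) x x' :
  measurements A bb.+1 x = measurements A bb.+1 x' -> `|x - x'| <= s.
Proof.
rewrite /= => /rcons_inj [e1 e2].
have [hs hG] := final_G hA x. have [hs' hG'] := final_G hA x'.
move: e2. rewrite hA /lam hs ltnn e1 hs' ltnn => /(mulfI (negbT (gt_eqF sc0))).
rewrite e1 in hG. rewrite (F_G0 hG) (F_G0 hG') => /vv_inj eK.
rewrite [X in X <= _]mx_normrE. apply: bigmax_le; first exact: ltW.
move=> [a i] _ /=. rewrite (ord1 a) !mxE.
have := congr1 (fun f : {ffun 'I_m -> int} => f i) eK. rewrite /= !ffunE => /floor_close.
rewrite /zc. set r := rr _.
have -> : x 0 i / s - r%:R / (m.+1)%:R - (x' 0 i / s - r%:R / (m.+1)%:R) = (x 0 i - x' 0 i) / s by ring.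
rewrite normrM (gtr0_norm (_ : 0 < s^-1)) ?invr_gt0 // ltr_pdivrMr // mul1r. exact: ltW.
Qed.

End Main.

Theorem theorem1 (R : realType) (m : nat) (N : 'rV[R]_m -> R)
  (hN : is_norm N) (eps : R) (heps : 0 < eps) :
  exists (A : adaptive_alg R m) (k : nat),
    (k <= n_meas m)%N /\
    lipschitz1_measurements N A k /\
    (forall x : 'rV[R]_m, N (x - run_alg A k x) <= eps).
Proof.
have [c0 c00 hc0] := norm_lower hN.
have hC : 0 < CN N + 1 by have := CN_ge0 hN; lra.
pose s := eps / (CN N + 1).
have s0 : 0 < s by rewrite divr_gt0.
have hL : 0 < Lc m s.
  rewrite /Lc divr_gt0 // invr_gt0. exact: del_gt0.
pose sc := c0 / Lc m s.
have sc0 : 0 < sc by rewrite divr_gt0.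
pose A0 := AdaptiveAlg (lam s sc) (fun _ => 0 : 'rV[R]_m).
pose Phi := fun ys : seq R => epsilon (inhabits (0 : 'rV[R]_m))
   (fun z => measurements A0 (bb m).+1 z = ys).
pose A := AdaptiveAlg (lam s sc) Phi.
have eA : forall k x, measurements A k x = measurements A0 k x.
  by elim => [|k IH] x //=; rewrite IH.
exists A, (bb m).+1. split; first by [].
split.
  move=> ys _ x y. rewrite /= /lam.
  have key : forall f : 'rV[R]_m -> R, (forall x y, `|f x - f y| <= Lc m s * `|x - y|) ->
      `|sc * f x - sc * f y| <= N (x - y).
    move=> f hf. rewrite -mulrBr normrM (gtr0_norm sc0).
    apply: le_trans (hc0 (x - y)). rewrite /sc -mulrA ler_pM2l //.
    rewrite mulrC ler_pdivrMr // mulrC. exact: hf.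
  case: ifP => _; apply: key.
    apply: (@absle R m s (fun z => @H R m s (rr ys) (size ys) z)) => x0 y0. exact: H_lip.
  apply: (@absle R m s (fun z => @F R m s (rr ys) z)) => x0 y0. exact: F_lip.
move=> x. rewrite /run_alg /= eA.
have hP : measurements A0 (bb m).+1 (Phi (measurements A0 (bb m).+1 x)) = measurements A0 (bb m).+1 x.
  apply: (@epsilon_spec _ (inhabits (0 : 'rV[R]_m)) (fun z => measurements A0 (bb m).+1 z = _)).
  by exists x.
have hd := same_meas s0 sc0 (erefl : alg_lam A0 = lam s sc) (esym hP).
apply: le_trans (N_upper hN _) _.
apply: le_trans (_ : (CN N + 1) * s <= eps); last by rewrite /s mulrC divfK // gt_eqF.
apply: le_trans (_ : CN N * s <= _).
  apply: ler_wpM2l; [exact: CN_ge0 | exact: hd].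
apply: ler_wpM2r; [exact: ltW | lra].
Qed.
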